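(* Let $B$ be an $n \times n$ matrix with integer coefficients, let $e_n = (0,\dots,0,1)^T \in \mathbb{R}^n$, and let $q(t) = \det\left(B - tI + t\, e_n e_n^*\right) = \sum_i q_i t^i$. Then \[ \max_i |q_i| \le 2\left(2\sqrt{n}\,\max_{i,j}|B_{ij}|\right)^n. \] *)

(* Defs.v *)
From mathcomp Require Import all_boot all_order all_algebra.
From mathcomp Require Import reals.
Set Implicit Arguments. Unset Strict Implicit. Unset Printing Implicit Defensive.
Import Order.TTheory GRing.Theory Num.Theory.
Local Open Scope ring_scope.

(* q(t) = det (B - t I + t e_n e_n^T), as a polynomial with integer coefficients,
   for B an n x n integer matrix with n = m.+1 (so that e_n exists). *)
Definition qdet_poly (m : nat) (B : 'M[int]_m.+1) : {poly int} :=
  \det (map_mx polyC B - 'X *: (1%:M : 'M[{poly int}]_m.+1)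
        + 'X *: delta_mx ord_max ord_max).

Definition maxentry (m : nat) (B : 'M[int]_m.+1) : int :=
  \big[Num.max/0]_(i < m.+1) \big[Num.max/0]_(j < m.+1) `|B i j|.

(* Main.v *)
Require Import Defs.
From mathcomp Require Import all_boot all_order all_algebra.
From mathcomp Require Import reals.
From mathcomp Require Import perm ring lra zify.
Set Warnings "-all".
Set Implicit Arguments. Unset Strict Implicit. Unset Printing Implicit Defensive.
Import Order.TTheory GRing.Theory Num.Theory.
Local Open Scope ring_scope.
Definition qf (R : realFieldType) n (G : 'M[R]_n) (x : 'rV[R]_n) := (x *m G *m x^T) 0 0.

Lemma tr11 (R : realFieldType) (P : 'M[R]_1) : P^T = P.
Proof. by rewrite [P]mx11_scalar tr_scalar_mx. Qed.

Lemma qf_block (R : realFieldType) n (c a : R) (U : 'M[R]_(1,n)) (D : 'M[R]_n) (y : 'rV_n) :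
  qf (block_mx c%:M U U^T D) (row_mx a%:M y)
  = a * a * c + 2 * a * (U *m y^T) 0 0 + qf D y.
Proof.
rewrite /qf mul_row_block tr_row_mx mul_row_col tr_scalar_mx.
have -> : y *m U^T = U *m y^T by rewrite -[y in LHS]trmxK -trmx_mul tr11.
set w := (U *m y^T) 0 0.
have Hw : U *m y^T = w%:M by rewrite {1}[U *m y^T]mx11_scalar.
rewrite Hw mulmxDl mulmxDl -[a%:M *m U *m _]mulmxA Hw -!scalar_mxM.
set T := y *m D *m y^T.
rewrite addrA -!raddfD /= mxE mxE /= mulr1n; ring.
Qed.

Lemma qf_delta (R : realFieldType) n (G : 'M[R]_n) i : qf G (delta_mx 0 i) = G i i.
Proof. by rewrite /qf -rowE trmx_delta -colE !mxE. Qed.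

Lemma det_schur (R : realFieldType) n (c : R) (U : 'M[R]_(1,n)) (D : 'M[R]_n) : c != 0 ->
  \det (block_mx c%:M U U^T D) = c * \det (D - c^-1 *: (U^T *m U)).
Proof.
move=> c0.
have -> : block_mx c%:M U U^T D = block_mx 1%:M 0 (c^-1 *: U^T) 1%:M *m
   block_mx c%:M U 0 (D - c^-1 *: (U^T *m U)).
  rewrite mulmx_block !mul1mx !mul0mx !addr0 mul_mx_scalar scalerA divff //.
  by rewrite scale1r -scalemxAl addrC subrK.
by rewrite det_mulmx det_lblock det_ublock !det1 det_scalar1 !mul1r.
Qed.

Lemma qf_schur (R : realFieldType) n (c : R) (U : 'M[R]_(1,n)) (D : 'M[R]_n) y :
  qf (D - c^-1 *: (U^T *m U)) y = qf D y - c^-1 * ((U *m y^T) 0 0) ^+ 2.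
Proof.
rewrite /qf mulmxBr mulmxBl -scalemxAr -scalemxAl.
rewrite !mulmxA -[y *m U^T *m U *m y^T]mulmxA.
have -> : y *m U^T = U *m y^T by rewrite -[y in LHS]trmxK -trmx_mul tr11.
set w := (U *m y^T) 0 0.
have Hw : U *m y^T = w%:M by rewrite {1}[U *m y^T]mx11_scalar.
rewrite Hw -scalar_mxM.
set T := y *m D *m y^T.
by rewrite !mxE /= mulr1n expr2.
Qed.

Lemma pd_det (R : realFieldType) n (G : 'M[R]_n) : G^T = G -> (forall x, x != 0 -> 0 < qf G x) ->
  \det G <= \prod_i G i i.
Proof.
elim: n G => [|n IH] G sG pG; first by rewrite det_mx00 big_ord0.
pose G' : 'M[R]_(1 + n) := G.
have [c [U [D [EG sD]]]] : exists c U D, G = block_mx (c%:M : 'M_1) U U^T D /\ D^T = D.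
  exists (ulsubmx G' 0 0), (ursubmx G'), (drsubmx G').
  have sG' : G'^T = G' := sG.
  rewrite -[G' in LHS]submxK tr_block_mx -[G' in RHS]submxK in sG'.
  case/eq_block_mx: sG' => _ _ h1 h2.
  by split=> //; rewrite h1 -mx11_scalar submxK.
rewrite EG in pG *.
have qf0 : forall m (M : 'M[R]_m), qf M 0 = 0 by move=> m M; rewrite /qf !mul0mx mxE.
have c0 : 0 < c.
  have := pG (row_mx 1%:M 0); rewrite qf_block qf0 trmx0 mulmx0 mxE mulr0 !addr0 !mul1r; apply.
  apply/negP => /eqP /(congr1 (@lsubmx _ _ 1 n)); rewrite row_mxKl.
  by move/matrixP => /(_ 0 0); rewrite !mxE /= => /eqP; rewrite oner_eq0.
rewrite det_schur ?gt_eqF //.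
set S := D - c^-1 *: (U^T *m U).
have sS : S^T = S by rewrite /S linearB /= linearZ /= trmx_mul trmxK sD.
have pS : forall y, y != 0 -> 0 < qf S y.
  move=> y y0; rewrite qf_schur.
  have := pG (row_mx (- ((U *m y^T) 0 0 / c))%:M y); rewrite qf_block.
  have -> : - ((U *m y^T) 0 0 / c) * - ((U *m y^T) 0 0 / c) * c +
      2 * - ((U *m y^T) 0 0 / c) * (U *m y^T) 0 0 = - (c^-1 * (U *m y^T) 0 0 ^+ 2).
    by field; rewrite gt_eqF.
  rewrite addrC; apply.
  apply/negP => /eqP /(congr1 (@rsubmx _ _ 1 n)); rewrite row_mxKr.
  by rewrite raddf0 => y00; rewrite y00 eqxx in y0.
have HS := IH S sS pS.
have Sii : forall i, 0 <= S i i /\ S i i <= D i i.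
  move=> i; split.
    rewrite -qf_delta ltW // pS //; apply/negP=> /eqP/matrixP/(_ 0 i).
    by rewrite !mxE !eqxx /= => /eqP; rewrite oner_eq0.
  rewrite /S !mxE big_ord1 mxE gerBl; apply: mulr_ge0; first by rewrite invr_ge0 ltW.
  by rewrite -expr2 sqr_ge0.
rewrite (big_ord_recl n).
have -> : block_mx c%:M U U^T D ord0 ord0 = c.
  have -> : (ord0 : 'I_(1 + n)) = lshift n (0 : 'I_1) by apply: val_inj.
  by rewrite block_mxEul mxE.
rewrite (eq_bigr (fun i => D i i)); last first.
  move=> i _; rewrite -(block_mxEdr c%:M U U^T D i i).
  by congr (block_mx _ _ _ _ _ _); apply: val_inj.
rewrite ler_pM2l //; apply: (le_trans HS); apply: ler_prod => i _.
by have [? ?] := Sii i; apply/andP; split.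
Qed.

Lemma hadamard (R : realFieldType) n (A : 'M[R]_n) : \det A ^+ 2 <= \prod_i \sum_j A i j ^+ 2.
Proof.
have H0 : 0 <= \prod_i \sum_j A i j ^+ 2.
  by apply: prodr_ge0 => i _; apply: sumr_ge0 => j _; apply: sqr_ge0.
have [d0|d0] := eqVneq (\det A) 0; first by rewrite d0 expr0n.
have uA : A \in unitmx by rewrite unitmxE unitfE.
have -> : \det A ^+ 2 = \det (A *m A^T) by rewrite det_mulmx det_tr expr2.
have -> : \prod_i \sum_j A i j ^+ 2 = \prod_i (A *m A^T) i i.
  by apply: eq_bigr => i _; rewrite mxE; apply: eq_bigr => j _; rewrite mxE expr2.
apply: pd_det; first by rewrite trmx_mul trmxK.
move=> x x0; rewrite /qf.
have -> : x *m (A *m A^T) *m x^T = (x *m A) *m (x *m A)^T by rewrite trmx_mul !mulmxA.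
rewrite mxE.
set v := x *m A.
have v0 : v != 0.
  apply/negP => /eqP v0; move: x0; rewrite -(mulmxK uA x) -/v v0 mul0mx eqxx //.
rewrite lt0r; apply/andP; split; last first.
  by apply: sumr_ge0 => j _; rewrite [v^T _ _]mxE -expr2 sqr_ge0.
apply/negP => /eqP s0; move/eqP: v0; apply; apply/matrixP => i j.
have nn : forall k : 'I_n, true -> 0 <= v 0 k * v^T k 0.
  by move=> k _; rewrite [v^T _ _]mxE -expr2 sqr_ge0.
have := @psumr_eq0P _ _ _ _ nn s0 j isT.
rewrite [v^T _ _]mxE -expr2 (ord1 i) => /eqP; rewrite sqrf_eq0 => /eqP ->.
by rewrite mxE.
Qed.
Definition Cf m (B : 'M[int]_m.+1) (f : {ffun 'I_m.+1 -> bool}) : 'M[int]_m.+1 :=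
  \matrix_(i, j) if f i then ((i == j) && (i != ord_max))%:R else B i j.

Definition kf m (f : {ffun 'I_m.+1 -> bool}) := #|[pred i | f i]|.

Lemma qdet_expand m (B : 'M[int]_m.+1) :
  qdet_poly B = \sum_f (- 'X) ^+ kf f * (\det (Cf B f))%:P.
Proof.
pose g (i j : 'I_m.+1) (b : bool) : {poly int} :=
  if b then - 'X * (((i == j) && (i != ord_max))%:R) else (B i j)%:P.
have Eg : forall i j, (map_mx polyC B - 'X *: (1%:M : 'M[{poly int}]_m.+1)
        + 'X *: delta_mx ord_max ord_max) i j = \sum_b g i j b.
  move=> i j; rewrite big_bool /g !mxE.
  have [->|im] := eqVneq i ord_max; have [->|jm] := eqVneq j ord_max.
  - by rewrite ?eqxx /= ?mulr1n ?mulr1 mulr0 add0r subrK.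
  - by rewrite ?eq_sym ?(negbTE jm) /= ?mulr0n ?mulr0 ?subr0 ?addr0 ?add0r.
  - by rewrite ?(negbTE im) ?andbF /= ?mulr0n ?mulr0 ?subr0 ?addr0 ?add0r.
  rewrite ?(negbTE im) /= ?mulr0n ?mulr0 ?addr0.
  by case: eqVneq => _ /=; rewrite ?mulr1n ?mulr0n ?mulr1 ?mulr0 ?subr0 ?add0r // addrC.
rewrite /qdet_poly {1}/determinant.
under eq_bigr => s _ do under eq_bigr => i _ do rewrite Eg.
under eq_bigr => s _ do rewrite bigA_distr_bigA big_distrr.
rewrite exchange_big /=; apply: eq_bigr => f _.
rewrite -det_map_mx /determinant big_distrr /=; apply: eq_bigr => s _.
rewrite mulrCA; congr (_ * _).
have -> : \prod_i g i (s i) (f i) = \prod_i ((if f i then - 'X else 1) * ((Cf B f) i (s i))%:P).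
  apply: eq_bigr => i _; rewrite /g mxE; case: (f i) => //=; rewrite ?mul1r //.
  by rewrite polyC_natr.
rewrite big_split /=; congr (_ * _).
  by rewrite -big_mkcond /= /kf -prodr_const.
apply: eq_bigr => i _; by rewrite [in RHS]mxE.
Qed.

Lemma coef_bound m (B : 'M[int]_m.+1) i :
  `|(qdet_poly B)`_i| <= \sum_f `|\det (Cf B f)|.
Proof.
rewrite qdet_expand coef_sum; apply: le_trans (ler_norm_sum _ _ _) _.
apply: ler_sum => f _; rewrite exprNn coefMC -signr_odd.
case: (odd (kf f)); rewrite ?expr1 ?expr0 ?mulN1r ?mul1r ?coefN ?normrN coefXn normrM;
  by case: (i == kf f); rewrite ?normr1 ?normr0 ?mul1r ?mul0r ?normr_ge0.
Qed.

Lemma entry_le m (B : 'M[int]_m.+1) i j : `|B i j| <= maxentry B.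
Proof.
rewrite /maxentry; apply: le_trans (le_bigmax _ _ i).
exact: (le_bigmax _ (fun j => `|B i j|) j).
Qed.

Lemma detCf_bound (R : realType) m (B : 'M[int]_m.+1) f :
  ((`|\det (Cf B f)|)%:~R : R) <= (Num.sqrt (m.+1)%:R * (maxentry B)%:~R) ^+ m.+1.
Proof.
set M := maxentry B.
have M0 : 0 <= M by apply: le_trans (entry_le B 0 0); apply: normr_ge0.
have R0 : 0 <= (Num.sqrt (m.+1)%:R * M%:~R : R) by rewrite mulr_ge0 ?sqrtr_ge0 ?ler0z.
have [M00|Mn0] := eqVneq M 0.
  have -> : \det (Cf B f) = 0.
    rewrite (expand_det_row _ ord_max) big1 // => j _; rewrite mxE.
    case: (f ord_max); first by rewrite eqxx andbF mul0r.
    have := entry_le B ord_max j; rewrite -/M M00 normr_le0 => /eqP ->.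
    by rewrite mul0r.
  by rewrite normr0 exprn_ge0.
have M1 : 1 <= M by lia.
set A := map_mx (intr : int -> R) (Cf B f).
have Ent : forall i j, A i j ^+ 2 <= M%:~R ^+ 2.
  move=> i j; rewrite -(real_normK (num_real (A i j))) !expr2.
  have H : `|A i j| <= M%:~R.
    rewrite mxE -intr_norm ler_int !mxE; case: (f i); last exact: entry_le.
    by case: (_ && _); rewrite ?normr1 ?normr0.
  by apply: ler_pM.
have H := hadamard A.
rewrite /A det_map_mx /= in H.
have H2 : (\det (Cf B f))%:~R ^+ 2 <= ((m.+1)%:R * M%:~R ^+ 2) ^+ m.+1 :> R.
  apply: (le_trans H).
  have -> : ((m.+1)%:R * M%:~R ^+ 2) ^+ m.+1 = \prod_(i < m.+1) ((m.+1)%:R * M%:~R ^+ 2) :> R.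
    by rewrite prodr_const card_ord.
  apply: ler_prod => i _; rewrite sumr_ge0 => [|j _]; last exact: sqr_ge0.
  have -> : (m.+1)%:R * M%:~R ^+ 2 = \sum_(j < m.+1) M%:~R ^+ 2 :> R.
    by rewrite sumr_const card_ord mulr_natl.
  by apply: ler_sum => j _; apply: Ent.
have E : ((m.+1)%:R * M%:~R ^+ 2) ^+ m.+1 = ((Num.sqrt (m.+1)%:R * M%:~R) ^+ m.+1) ^+ 2 :> R.
  by rewrite [RHS]exprAC; congr (_ ^+ _); rewrite exprMn sqr_sqrtr ?ler0n.
rewrite E in H2.
rewrite intr_norm -ler_sqr ?nnegrE ?normr_ge0 ?exprn_ge0 //.
by rewrite real_normK ?num_real.
Qed.

Theorem lemma3 (R : realType) (m : nat) (B : 'M[int]_m.+1) :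
  \big[Num.max/0]_(i < (size (qdet_poly B)).+1) ((`|(qdet_poly B)`_i|)%:~R : R)
    <= 2 * (2 * Num.sqrt ((m.+1)%:R : R) * (maxentry B)%:~R) ^+ m.+1.
Proof.
set K := (Num.sqrt ((m.+1)%:R : R) * (maxentry B)%:~R).
have M0 : 0 <= maxentry B by apply: le_trans (entry_le B 0 0); apply: normr_ge0.
have K0 : 0 <= K by rewrite mulr_ge0 ?sqrtr_ge0 ?ler0z.
have -> : 2 * Num.sqrt ((m.+1)%:R : R) * (maxentry B)%:~R = 2 * K by rewrite mulrA.
rewrite exprMn.
apply: bigmax_le; first by rewrite !mulr_ge0 ?exprn_ge0.
move=> i _.
apply: (@le_trans _ _ (\sum_(f : {ffun 'I_m.+1 -> bool}) K ^+ m.+1)).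
  apply: (@le_trans _ _ (\sum_(f : {ffun 'I_m.+1 -> bool}) ((`|\det (Cf B f)|)%:~R : R))).
    by rewrite -rmorph_sum /= ler_int coef_bound.
  by apply: ler_sum => f _; apply: detCf_bound.
rewrite sumr_const card_ffun card_bool card_ord -[K ^+ m.+1 *+ _]mulr_natl natrX.
have h1 : 0 <= K ^+ m.+1 by rewrite exprn_ge0.
have h2 : 0 <= (2 : R) ^+ m.+1 by rewrite exprn_ge0.
move: h1 h2; set a := K ^+ m.+1; set b := (2 : R) ^+ m.+1 => h1 h2.
by rewrite ler_peMl ?mulr_ge0 ?ler1n.
Qed.
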